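(* Let $X=(X,d,\mu)$ be a metric measure space with $\mu$ uniformly locally doubling, and let $\theta\ge0$. Then $\mathcal{ADR}_\theta(X)\subset\mathcal{LCR}_\theta(X)$.
   Context: A metric measure space is a triple $X=(X,d,\mu)$ with $(X,d)$ a complete separable metric space and $\mu$ a Borel regular measure with $0<\mu(B)<\infty$ for every ball $B$ and $\operatorname{supp}\mu=X$. All balls are closed: $B_r(x)=\{y:d(x,y)\le r\}$. $\mu$ is uniformly locally doubling if for every $R>0$, $\sup_{r\in(0,R]}\sup_{x}\mu(B_{2r}(x))/\mu(B_r(x))<\infty$. For $\theta\ge0$, $E\subset X$, $\delta\in(0,\infty]$: $\mathcal H_{\theta,\delta}(E)=\inf\{\sum_i\mu(B_{r_i}(x_i))/r_i^\theta:E\subset\bigcup_iB_{r_i}(x_i),\ r_i<\delta\}$ (at most countable coverings by balls), $\mathcal H_\theta(E)=\lim_{\delta\to0}\mathcal H_{\theta,\delta}(E)$. $S\in\mathcal{ADR}_\theta(X)$ (codimension-$\theta$ Ahlfors–David regular) if there are $c_1,c_2>0$ with $c_1\mu(B_r(x))/r^\theta\le\mathcal H_\theta(B_r(x)\cap S)\le c_2\mu(B_r(x))/r^\theta$ for all $x\in S$, $r\in(0,1]$. $S\in\mathcal{LCR}_\theta(X)$ (lower codimension-$\theta$ content regular) if there is $\lambda>0$ with $\mathcal H_{\theta,r}(B_r(x)\cap S)\ge\lambda\mu(B_r(x))/r^\theta$ for all $x\in S$, $r\in(0,1]$. *)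

(* Defs.v *)
From HB Require Import structures.
From mathcomp Require Import all_boot all_order all_algebra.
From mathcomp Require Import all_classical all_reals all_analysis.
Set Implicit Arguments. Unset Strict Implicit. Unset Printing Implicit Defensive.
Import Order.TTheory GRing.Theory Num.Theory.
Local Open Scope classical_set_scope.
Local Open Scope ring_scope.

Section MMS.
Variables (R : realType) (T : Type) (d : T -> T -> R).

Definition cball (x : T) (r : R) : set T := [set y | d x y <= r].
Definition oball (x : T) (r : R) : set T := [set y | d x y < r].

Definition is_metric : Prop :=
  [/\ forall x y, 0 <= d x y,
      forall x y, d x y = 0 <-> x = y,
      forall x y, d x y = d y x &
      forall x y z, d x z <= d x y + d y z].

Definition d_complete : Prop :=
  forall u : nat -> T,
    (forall e, 0 < e -> exists N, forall m n, (N <= m)%N -> (N <= n)%N -> d (u m) (u n) < e) ->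
    exists l, forall e, 0 < e -> exists N, forall n, (N <= n)%N -> d (u n) l < e.

Definition d_separable : Prop :=
  exists D : set T, countable D /\
    forall x e, 0 < e -> exists2 y, D y & d x y < e.

Definition d_open (A : set T) : Prop :=
  forall x, A x -> exists2 e, 0 < e & oball x e `<=` A.

Definition d_borel (A : set T) : Prop := <<s d_open >> A.

Variable mu : set T -> \bar R.

Definition is_outer_measure : Prop :=
  [/\ mu set0 = 0%E,
      forall A, (0 <= mu A)%E,
      forall A B, A `<=` B -> (mu A <= mu B)%E &
      forall A : nat -> set T, (mu (\bigcup_n A n) <= \sum_(0 <= n <oo) mu (A n))%E].

Definition borel_regular : Prop :=
  (forall A, d_borel A -> forall E, mu E = (mu (E `&` A) + mu (E `\` A))%E) /\
  (forall A, exists B, [/\ d_borel B, A `<=` B & mu B = mu A]).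

Definition support : set T :=
  [set x | forall U, d_open U -> U x -> (0 < mu U)%E].

Definition metric_measure_space : Prop :=
  [/\ is_metric, d_complete & d_separable] /\
  [/\ is_outer_measure, borel_regular,
      (forall x r, 0 < r -> (0 < mu (cball x r))%E /\ (mu (cball x r) < +oo)%E) &
      support = setT].

Definition uniformly_locally_doubling : Prop :=
  forall Rad, 0 < Rad -> exists C : R, forall r x, 0 < r -> r <= Rad ->
    (mu (cball x (2 * r)) <= C%:E * mu (cball x r))%E.

Definition hcontent (theta delta : R) (E : set T) : \bar R :=
  ereal_inf [set s | exists (J : set nat) (x : nat -> T) (r : nat -> R),
    [/\ (forall i, J i -> 0 < r i /\ r i < delta),
        E `<=` \bigcup_(i in J) cball (x i) (r i) &
        s = \esum_(i in J) (mu (cball (x i) (r i)) * ((r i `^ theta)^-1)%:E)%E]].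

Definition hmeasure (theta : R) (E : set T) : \bar R :=
  lim ((fun delta => hcontent theta delta E) @ 0^'+).

Definition ADR (theta : R) (S : set T) : Prop :=
  exists c1 c2 : R, [/\ 0 < c1, 0 < c2 &
    forall x r, S x -> 0 < r -> r <= 1 ->
      ((c1 / r `^ theta)%:E * mu (cball x r) <= hmeasure theta (cball x r `&` S))%E /\
      (hmeasure theta (cball x r `&` S) <= (c2 / r `^ theta)%:E * mu (cball x r))%E].

Definition LCR (theta : R) (S : set T) : Prop :=
  exists lambda : R, 0 < lambda /\
    forall x r, S x -> 0 < r -> r <= 1 ->
      ((lambda / r `^ theta)%:E * mu (cball x r) <= hcontent theta r (cball x r `&` S))%E.

End MMS.

(* Main.v *)
Require Import Defs.
From HB Require Import structures.
From mathcomp Require Import all_boot all_order all_algebra.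
From mathcomp Require Import all_classical all_reals all_analysis.
From mathcomp Require Import lra ring.
Import Order.TTheory GRing.Theory Num.Theory.
Local Open Scope classical_set_scope.
Local Open Scope ring_scope.

Lemma inv_anti (F : realFieldType) (p P : F) : 0 < p -> p <= P -> P^-1 <= p^-1.
Proof. move=> p0 pP; rewrite lef_pV2 // posrE //; exact: lt_le_trans pP. Qed.

Lemma keyA (F : realFieldType) (a D P p M m : F) : 0 < D -> 0 < p -> p <= P -> 0 <= a ->
  a <= D^-1 -> 0 <= m -> 0 <= M -> M <= D * m -> a / P * M <= m / p.
Proof.
move=> D0 p0 pP a0 aD m0 M0 MD.
have P0 : 0 < P by exact: lt_le_trans pP.
have aD1 : a * D <= 1 by rewrite -ler_pdivlMr // div1r.
apply: (@le_trans _ _ (a / P * (D * m))).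
  by apply: ler_wpM2l => //; rewrite divr_ge0 // ltW.
apply: (@le_trans _ _ (m / P)).
  have -> : a / P * (D * m) = (a * D) * (m / P) by ring.
  rewrite -[X in _ <= X]mul1r; apply: ler_wpM2r => //.
  by rewrite divr_ge0 // ltW.
by apply: ler_wpM2l => //; exact: inv_anti.
Qed.

Lemma keyB (F : realFieldType) (a k P M s : F) : 0 < k -> 0 < P -> 0 <= a -> 0 <= M ->
  a <= k^-1 -> M / P <= k * s -> a / P * M <= s.
Proof.
move=> k0 P0 a0 M0 ak H.
have ak1 : a * k <= 1 by rewrite -ler_pdivlMr // div1r.
have s0 : 0 <= s.
  have : 0 <= k * s by apply: le_trans H; rewrite divr_ge0 // ltW.
  by rewrite pmulr_rge0.
apply: (@le_trans _ _ (a * (k * s))).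
  have -> : a / P * M = a * (M / P) by ring.
  by apply: ler_wpM2l.
by rewrite mulrA -[X in _ <= X]mul1r; apply: ler_wpM2r.
Qed.

Lemma keyC (F : realFieldType) (c D P p M m : F) : 0 <= c -> 0 <= D -> 0 < p -> p <= P ->
  0 <= M -> 0 <= m -> M <= D * m -> c / P * M <= (c * D) * (m * p^-1).
Proof.
move=> c0 D0 p0 pP M0 m0 MD.
have P0 : 0 < P by exact: lt_le_trans pP.
apply: (@le_trans _ _ (c / P * (D * m))).
  by apply: ler_wpM2l => //; rewrite divr_ge0 // ltW.
apply: (@le_trans _ _ (c / p * (D * m))).
  apply: ler_wpM2r; first by rewrite mulr_ge0.
  by apply: ler_wpM2l => //; exact: inv_anti.
by rewrite le_eqVlt; apply/orP; left; apply/eqP; ring.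
Qed.
Arguments keyA {F a D P p M m}.
Arguments keyB {F a k P M s}.
Arguments keyC {F c D P p M m}.

Lemma keyD (F : realFieldType) (a c k P M s : F) : 0 < k -> 0 < P -> 0 < c -> 0 <= M ->
  0 <= a -> a <= c / k -> c / P * M <= k * s -> a / P * M <= s.
Proof.
move=> k0 P0 c0 M0 a0 ack H.
apply: (@le_trans _ _ (c / k / P * M)).
  apply: ler_wpM2r => //; apply: ler_wpM2r => //; by rewrite invr_ge0 ltW.
have -> : c / k / P * M = (c / P * M) / k by rewrite -!mulrA; congr (_ * _); rewrite mulrC -!mulrA; congr (_ * _); rewrite mulrC.
by rewrite ler_pdivrMr // (mulrC s).
Qed.
Arguments keyD {F a c k P M s}.

Lemma esumZ_le (R : realType) (J : set nat) (a : nat -> \bar R) (k : R) :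
  0 <= k -> (forall i, J i -> (0 <= a i)%E) ->
  (\esum_(i in J) (k%:E * a i) <= k%:E * \esum_(i in J) a i)%E.
Proof.
move=> k0 a0; apply: ge_ereal_sup => _ [X [finX XJ] <-].
rewrite fsbig_finite //= big_seq -ge0_sume_distrr; last first.
  by move=> i; rewrite in_fset_set // inE => /XJ /a0.
rewrite -big_seq -fsbig_finite //; apply: lee_wpmul2l; first by rewrite lee_fin.
by apply: ereal_sup_ubound; exists X.
Qed.

Section M.
Variables (R : realType) (T : Type) (d : T -> T -> R) (mu : set T -> \bar R) (theta : R).
Hypothesis dge0 : forall x y, 0 <= d x y.
Hypothesis dsym : forall x y, d x y = d y x.
Hypothesis dtri : forall x y z, d x z <= d x y + d y z.
Hypothesis mu0 : forall A, (0 <= mu A)%E.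
Hypothesis mumono : forall A B, A `<=` B -> (mu A <= mu B)%E.
Hypothesis muball : forall x r, 0 < r -> (0 < mu (cball d x r))%E /\ (mu (cball d x r) < +oo)%E.
Hypothesis theta0 : 0 <= theta.
Variable C : R.
Hypothesis C1 : 1 <= C.
Hypothesis Cdbl : forall r x, 0 < r -> r <= 8 ->
  (mu (cball d x (2 * r)) <= C%:E * mu (cball d x r))%E.
Lemma hcontent_sub delta A B : A `<=` B ->
  (hcontent d mu theta delta A <= hcontent d mu theta delta B)%E.
Proof.
move=> AB; apply: le_ereal_inf_tmp => s [J [x [r [Hr HB ->]]]].
apply: ereal_inf_lbound; exists J, x, r; split => //.
exact: subset_trans HB.
Qed.

Lemma hcontent_anti A : {in Interval (BRight (0:R)) (BInfty _ false) &,
  {homo (fun delta => hcontent d mu theta delta A) : n m / (n <= m)%R >-> (m <= n)%E}}.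
Proof.
move=> a b _ _ ab; apply: le_ereal_inf_tmp => s [J [x [r [Hr HB ->]]]].
apply: ereal_inf_lbound; exists J, x, r; split => //.
by move=> i /Hr [r0 ra]; split => //; apply: lt_le_trans ab.
Qed.

Lemma hmeasureE A : hmeasure d mu theta A =
  ereal_sup [set hcontent d mu theta delta A | delta in
      [set` Interval (BRight (0:R)) (BInfty _ false)]].
Proof.
apply: cvg_lim => //.
apply: (nonincreasing_at_right_cvge (BInfty _ false)) => //.
exact: hcontent_anti.
Qed.

Lemma hcontent_le_hmeasure A delta : 0 < delta ->
  (hcontent d mu theta delta A <= hmeasure d mu theta A)%E.
Proof.
move=> d0; rewrite hmeasureE; apply: ereal_sup_ubound; exists delta => //=.
by rewrite in_itv /= d0.
Qed.

Lemma hmeasure_le A L : (forall delta, 0 < delta -> (hcontent d mu theta delta A <= L)%E) ->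
  (hmeasure d mu theta A <= L)%E.
Proof.
move=> H; rewrite hmeasureE; apply: ge_ereal_sup => _ [delta /= + <-].
by rewrite in_itv /= andbT => /H.
Qed.

Definition term (x : T) (r : R) : \bar R := (mu (cball d x r) * ((r `^ theta)^-1)%:E)%E.

Lemma term_ge0 x r : (0 <= term x r)%E.
Proof. by apply: mule_ge0 => //; rewrite lee_fin invr_ge0 powR_ge0. Qed.

Lemma hcontent_union (x0 : T) delta (E : set T) (J : set nat) (F : nat -> set T)
    (b : nat -> \bar R) :
  E `<=` \bigcup_(i in J) F i ->
  (forall i, J i -> exists (Ji : set nat) (xi : nat -> T) (ri : nat -> R), [/\ forall j, Ji j -> 0 < ri j /\ ri j < delta,
      F i `<=` \bigcup_(j in Ji) cball d (xi j) (ri j) &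
      (\esum_(j in Ji) term (xi j) (ri j) <= b i)%E]) ->
  (hcontent d mu theta delta E <= \esum_(i in J) b i)%E.
Proof.
move=> EF HF.
pose Q (i : nat) (c : set nat * (nat -> T) * (nat -> R)) :=
   [/\ forall j, c.1.1 j -> 0 < c.2 j /\ c.2 j < delta,
      F i `<=` \bigcup_(j in c.1.1) cball d (c.1.2 j) (c.2 j) &
      (\esum_(j in c.1.1) term (c.1.2 j) (c.2 j) <= b i)%E].
have [f Hf] : {f : nat -> (set nat * (nat -> T) * (nat -> R)) & forall i, J i -> Q i (f i)}.
  apply: (@boolp.choice _ _ (fun i c => J i -> Q i c)) => i.
  case: (boolp.pselect (J i)) => Ji; last by exists (set0, (fun _ => x0), (fun _ => 1)).
  have [Ji' [xi [ri H]]] := HF i Ji.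
  by exists (Ji', xi, ri).
pose P := J `*`` (fun i => (f i).1.1).
pose J' := [set pickle k | k in P].
pose x' n := if unpickle n is Some k then (f k.1).1.2 k.2 else x0.
pose r' n := if unpickle n is Some k then (f k.1).2 k.2 else 1.
apply: ge_ereal_inf; exists (\esum_(n in J') term (x' n) (r' n)); first last.
  rewrite (esum_image P pickle (fun n => term (x' n) (r' n))); last first.
    by move=> u v _ _; apply: (pcan_inj pickleK).
  rewrite /x' /r'.
  under eq_esum do rewrite pickleK.
  rewrite -(@esum_esum _ _ _ J (fun i => (f i).1.1) (fun i j => term ((f i).1.2 j) ((f i).2 j))); last first.
    by move=> i j _ _; exact: term_ge0.
  by apply: le_esum => i Ji; have [] := Hf i Ji.
exists J', x', r'; split => //.
- move=> n [k [Jk1 Jk2] <-]; rewrite /x' /r' pickleK.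
  by have [H _ _] := Hf _ Jk1; apply: H.
- move=> z /EF [i Ji Fiz].
  have [_ H _] := Hf i Ji.
  have [j Jj zj] := H z Fiz.
  exists (pickle (i, j)); first by exists (i, j).
  by rewrite /x' /r' pickleK.
Qed.

Definition mr x r := fine (mu (cball d x r)).

Lemma mrE x r : 0 < r -> mu (cball d x r) = (mr x r)%:E.
Proof.
move=> r0; rewrite /mr fineK // ge0_fin_numE //; by have [] := muball x r r0.
Qed.

Lemma mr_gt0 x r : 0 < r -> 0 < mr x r.
Proof. by move=> r0; have [+ _] := muball x r r0; rewrite mrE // lte_fin. Qed.

Lemma cball_sub x y r s : d x y + r <= s -> cball d y r `<=` cball d x s.
Proof.
move=> H z; rewrite /cball /= => yz.
by apply: le_trans (dtri x y z) _; apply: le_trans H; rewrite lerD2l.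
Qed.

Lemma mr_sub x y r s : 0 < r -> 0 < s -> d x y + r <= s -> mr y r <= mr x s.
Proof.
move=> r0 s0 H; rewrite -lee_fin -!mrE //; apply: mumono; exact: cball_sub.
Qed.

Lemma mr_dbl n x r : 0 < r -> r * 2 ^+ n <= 16 -> mr x (r * 2 ^+ n) <= C ^+ n * mr x r.
Proof.
move=> r0; elim: n => [|n IH]; first by rewrite !expr0 mulr1 mul1r.
have p0 : 0 < r * 2 ^+ n by rewrite mulr_gt0 // exprn_gt0.
rewrite exprS (mulrC 2) mulrA => H.
have H' : r * 2 ^+ n <= 8 by lra.
have := @Cdbl _ x p0 H'; rewrite !mrE // ?mulr_gt0 // lee_fin (mulrC 2) => H2.
have H3 : r * 2 ^+ n <= 16 by lra.
have := IH H3 => H4.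
apply: le_trans H2 _; rewrite exprS -mulrA ler_wpM2l //.
exact: le_trans ler01 C1.
Qed.

Lemma powR_mono a b : 0 < a -> a <= b -> a `^ theta <= b `^ theta.
Proof.
move=> a0 ab; apply: ge0_ler_powR => //; rewrite nnegrE; apply: ltW => //.
exact: lt_le_trans ab.
Qed.

Lemma term_mr x r : 0 < r -> term x r = (mr x r * (r `^ theta)^-1)%:E.
Proof. by move=> r0; rewrite /term mrE // EFinM. Qed.

Lemma ADR_LCR_sec S : ADR d mu theta S -> LCR d mu theta S.
Proof.
move=> [c1 [c2 [c10 c20 HS]]].
have C0 : 0 < C by exact: lt_le_trans ltr01 C1.
pose K := c2 * C ^+ 2.
have K0 : 0 < K by rewrite mulr_gt0 // exprn_gt0.
pose lam := Num.min ((C ^+ 4)^-1) (c1 / (2 * K)).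
have lam1 : lam <= (C ^+ 4)^-1 by rewrite ge_min lexx.
have lam2 : lam <= c1 / (2 * K) by rewrite ge_min lexx orbT.
have lam0 : 0 < lam.
  by rewrite lt_min invr_gt0 exprn_gt0 //= divr_gt0 // mulr_gt0.
exists lam; split => // x r Sx r0 r1.
have rt0 : 0 < r `^ theta by rewrite powR_gt0.
apply: le_ereal_inf_tmp => _ [J [xs [rs [Hr Hcov ->]]]].
case: (boolp.pselect (exists i, [/\ J i, r / 4 <= rs i &
    exists y, cball d x r y /\ S y /\ cball d (xs i) (rs i) y])).
  move=> [i [Ji ri [y [yx [Sy yi]]]]].
  have [rs0 rsr] := Hr i Ji.
  apply: (@le_trans _ _ (term (xs i) (rs i))); last first.
    apply: esum_ge; exists [set i]; first by split; [exact: finite_set1|move=> _ ->].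
    by rewrite fsbig_set1.
  rewrite term_mr // mrE // -EFinM lee_fin.
  have Mle : mr x r <= C ^+ 4 * mr (xs i) (rs i).
    have e16 : (2:R) ^+ 4 = 16 by rewrite !exprS expr0; lra.
    apply: (@le_trans _ _ (mr (xs i) (rs i * 2 ^+ 4))); last by apply: mr_dbl => //; rewrite e16; lra.
    apply: mr_sub => //; first by rewrite mulr_gt0 // exprn_gt0.
    rewrite e16.
    have h1 := dtri (xs i) y x.
    rewrite (dsym y x) in h1.
    move: yi yx; rewrite /cball /= => yi yx.
    lra.
  have hD : 0 < C ^+ 4 by rewrite exprn_gt0.
  have hp : 0 < rs i `^ theta by rewrite powR_gt0.
  have hpP : rs i `^ theta <= r `^ theta by apply: powR_mono => //; apply: ltW.
  have := keyA hD hp hpP (ltW lam0) lam1 (ltW (mr_gt0 _ _ rs0)) (ltW (mr_gt0 _ _ r0)) Mle. exact.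
move=> NA.
pose E := cball d x r `&` S.
have Hm : (hmeasure d mu theta E <=
    \esum_(i in J) ((2 * K)%:E * term (xs i) (rs i)))%E.
  apply: hmeasure_le => delta d0.
  apply: (@hcontent_union x delta E J (fun i => cball d (xs i) (rs i) `&` E)).
    by move=> z Ez; have [i Ji zi] := Hcov z Ez; exists i.
  move=> i Ji; have [rs0 rsr] := Hr i Ji.
  case: (boolp.pselect (exists y, E y /\ cball d (xs i) (rs i) y)); last first.
    move=> Ne; exists set0, (fun _ => x), (fun _ => 1); split => //.
    - by move=> z [zi Ez]; exfalso; apply: Ne; exists z.
    - rewrite esum_set0; apply: mule_ge0; [by rewrite lee_fin mulr_ge0 // ltW|exact: term_ge0].
  move=> [y [[yx Sy] yi]].
  have rsm : rs i < r / 4.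
    rewrite ltNge; apply/negP => h; apply: NA; exists i; split => //.
    by exists y.
  have rs20 : 0 < 2 * rs i by rewrite mulr_gt0.
  have H1 : (hcontent d mu theta delta (cball d (xs i) (rs i) `&` E) <=
      (K * (mr (xs i) (rs i) * (rs i `^ theta)^-1))%:E)%E.
    apply: le_trans (@hcontent_sub delta _ (cball d y (2 * rs i) `&` S) _) _.
      move=> z [zi [zx Sz]]; split => //.
      move: zi yi; rewrite /cball /= => zi yi.
      have := dtri y (xs i) z; rewrite (dsym y (xs i)); lra.
    apply: le_trans (hcontent_le_hmeasure _ _ d0) _.
    have [_ Hup] := HS y (2 * rs i) Sy rs20 ltac:(lra).
    apply: le_trans Hup _.
    rewrite mrE // -EFinM lee_fin.
    have hD : 0 <= C ^+ 2 by rewrite exprn_ge0 // ltW.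
    have hp : 0 < rs i `^ theta by rewrite powR_gt0.
    have hpP : rs i `^ theta <= (2 * rs i) `^ theta by apply: powR_mono => //; lra.
    apply: (keyC (ltW c20) hD hp hpP (ltW (mr_gt0 _ _ rs20)) (ltW (mr_gt0 _ _ rs0))).
    have e4 : (2:R) ^+ 2 = 4 by rewrite !exprS expr0; lra.
    apply: (@le_trans _ _ (mr (xs i) (rs i * 2 ^+ 2))); last by apply: mr_dbl => //; rewrite e4; lra.
    apply: mr_sub => //; first by rewrite mulr_gt0 // exprn_gt0.
    rewrite e4; move: yi; rewrite /cball /= => yi; lra.
  have tpos : 0 < mr (xs i) (rs i) * (rs i `^ theta)^-1.
    by rewrite mulr_gt0 ?mr_gt0 // invr_gt0 powR_gt0.
  have H2 : (hcontent d mu theta delta (cball d (xs i) (rs i) `&` E) <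
      (2 * K * (mr (xs i) (rs i) * (rs i `^ theta)^-1))%:E)%E.
    apply: le_lt_trans H1 _; rewrite lte_fin ltr_pM2r //; lra.
  have [_ [Ji' [xi [ri [Hri Hcovi ->]]]] slt] := ereal_inf_lt H2.
  exists Ji', xi, ri; split => //.
  by rewrite term_mr // -EFinM; apply: ltW.
have [Hlow _] := HS x r Sx r0 r1.
have Hz := @esumZ_le R J (fun i => term (xs i) (rs i)) (2 * K) ltac:(lra)
  (fun i _ => term_ge0 (xs i) (rs i)).
have Hall := le_trans Hlow (le_trans Hm Hz).
have s0 : (0 <= \esum_(i in J) term (xs i) (rs i))%E.
  by apply: esum_ge0 => i _; exact: term_ge0.
change ((lam / r `^ theta)%:E * mu (cball d x r) <= \esum_(i in J) term (xs i) (rs i))%E.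
move: Hall s0; rewrite mrE //.
case: (\esum_(i in J) term (xs i) (rs i)) => [s| |] Hall s0; last by [].
  rewrite -!EFinM lee_fin in Hall; rewrite -EFinM lee_fin.
  apply: (keyD _ rt0 c10 (ltW (mr_gt0 _ _ r0)) (ltW lam0) lam2 Hall).
  by rewrite mulr_gt0.
by rewrite leey.
Qed.

End M.

Theorem mainTheorem7 (R : realType) (T : Type) (d : T -> T -> R)
    (mu : set T -> \bar R) (theta : R) :
  metric_measure_space d mu ->
  uniformly_locally_doubling d mu ->
  0 <= theta ->
  ADR d mu theta `<=` LCR d mu theta.
Proof.
move=> [[[dge0 deq dsym dtri] _ _] [[_ mu0 mumono _] _ muball _]] Hdbl theta0 S HS.
have [C0 HC] := Hdbl 8 ltac:(lra).
pose C := Num.max C0 1.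
have C1 : 1 <= C by rewrite le_max lexx orbT.
have Cdbl : forall r x, 0 < r -> r <= 8 ->
    (mu (cball d x (2 * r)) <= C%:E * mu (cball d x r))%E.
  move=> r x r0 r8; apply: le_trans (HC r x r0 r8) _.
  by apply: lee_wpmul2r => //; rewrite lee_fin le_max lexx.
apply: ADR_LCR_sec HS; eassumption.
Qed.
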